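(* Let $G\subset\mathrm{Homeo}_+([0,1])$ be a group without linked fixed points, and let $I^\infty(G)=\bigcup_{n\ge0}I^n(G)$ where $I^0(G)=G$ and $I^{n+1}(G)=I(I^n(G))$. Then $I^\infty(G)$ is a complete group without linked fixed points, and moreover: (1) the orbits of $I^\infty(G)$ and of $G$ on $[0,1]$ coincide; (2) every pair of successive fixed points of $I^\infty(G)$ is a pair of successive fixed points of $G$; (3) for every pair $\{a,b\}$ of successive fixed points of some $f\in G$ and every relative translation number $\tau$ of $I^\infty(G)$ at $\{a,b\}$, one has $\tau(G_{[a,b]})=\tau(I^\infty(G)_{[a,b]})$; (4) every complete group without linked fixed points containing $G$ contains $I^\infty(G)$.
   Context: For a group $G$ of homeomorphisms of $[0,1]$, a pair of successive fixed points of $G$ is a pair $\{a,b\}$, $a<b$, such that $(a,b)$ is a connected component of $[0,1]\setminus \mathrm{Fix}(g)$ for some $g\in G$; two pairs $\{a,b\},\{c,d\}$ are linked if $(a,b)\cap\{c,d\}$ or $(c,d)\cap\{a,b\}$ consists of exactly one point; $G$ is without linked fixed points if no two such pairs are linked. A homeomorphism $h\in\mathrm{Homeo}_+([0,1])$ is induced by $g\in\mathrm{Homeo}_+([0,1])$ if $h(x)\in\{x,g(x)\}$ for every $x\in[0,1]$ (equivalently $h$ equals $g$ on a union of connected components of $[0,1]\setminus\mathrm{Fix}(g)$ and the identity elsewhere). For a group $G$, $I(G)$ denotes the group generated by all homeomorphisms induced by elements of $G$. A group without linked fixed points is complete if it contains every homeomorphism induced by any of its elements. For a group $H$ without linked fixed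 points and a pair $\{a,b\}$ of successive fixed points, $H_{[a,b]}$ is the stabilizer of $[a,b]$ in $H$, and a relative translation number at $\{a,b\}$ is a group morphism $\tau:H_{[a,b]}\to\mathbb R$ whose kernel is the set of elements having a fixed point in $(a,b)$ and with $\tau(g)>0$ iff $g(x)>x$ on $(a,b)$ (such a morphism exists and is unique up to a positive factor). *)

(* Defs.v *)
From Stdlib Require Import Reals.
Open Scope R_scope.

(* Elements of Homeo_+([0,1]) are represented by functions R -> R that are
   increasing bijections of [0,1] and equal to the identity outside [0,1]
   (so that extensional equality of maps of [0,1] is equality of functions). *)
Definition homeo_plus (f : R -> R) : Prop :=
  (forall x y, 0 <= x -> x < y -> y <= 1 -> f x < f y) /\
  (forall x, 0 <= x <= 1 -> 0 <= f x <= 1) /\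
  (forall y, 0 <= y <= 1 -> exists x, 0 <= x <= 1 /\ f x = y) /\
  (forall x, (x < 0 \/ 1 < x) -> f x = x).

Definition comp (g h : R -> R) : R -> R := fun x => g (h x).

Definition is_group (G : (R -> R) -> Prop) : Prop :=
  (forall g, G g -> homeo_plus g) /\
  G (fun x => x) /\
  (forall g h, G g -> G h -> G (comp g h)) /\
  (forall g, G g -> exists g', G g' /\ forall x, g' (g x) = x /\ g (g' x) = x).

Definition succ_fix (g : R -> R) (a b : R) : Prop :=
  0 <= a /\ a < b /\ b <= 1 /\ g a = a /\ g b = b /\
  (forall x, a < x < b -> g x <> x).

Definition sfp (G : (R -> R) -> Prop) (a b : R) : Prop :=
  exists g, G g /\ succ_fix g a b.

Definition in_open (a b x : R) : Prop := a < x /\ x < b.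

Definition exactly_one (a b c d : R) : Prop :=
  (in_open a b c /\ ~ in_open a b d) \/ (~ in_open a b c /\ in_open a b d).

Definition linked (a b c d : R) : Prop :=
  exactly_one a b c d \/ exactly_one c d a b.

Definition without_linked (G : (R -> R) -> Prop) : Prop :=
  forall a b c d, sfp G a b -> sfp G c d -> ~ linked a b c d.

Definition induced (g h : R -> R) : Prop :=
  homeo_plus h /\ forall x, 0 <= x <= 1 -> h x = x \/ h x = g x.

Definition generated (S : (R -> R) -> Prop) (f : R -> R) : Prop :=
  forall H, is_group H -> (forall s, S s -> H s) -> H f.

Definition I_op (G : (R -> R) -> Prop) : (R -> R) -> Prop :=
  generated (fun h => exists g, G g /\ induced g h).

Fixpoint I_iter (n : nat) (G : (R -> R) -> Prop) : (R -> R) -> Prop :=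
  match n with
  | O => G
  | S m => I_op (I_iter m G)
  end.

Definition I_inf (G : (R -> R) -> Prop) (f : R -> R) : Prop :=
  exists n, I_iter n G f.

Definition complete (H : (R -> R) -> Prop) : Prop :=
  is_group H /\ without_linked H /\
  (forall g h, H g -> induced g h -> H h).

Definition stab_int (a b : R) (g : R -> R) : Prop :=
  forall y, a <= y <= b <-> exists x, a <= x <= b /\ g x = y.

Definition rel_transl (H : (R -> R) -> Prop) (a b : R) (tau : (R -> R) -> R) : Prop :=
  (forall g h, H g -> stab_int a b g -> H h -> stab_int a b h ->
     tau (comp g h) = tau g + tau h) /\
  (forall g, H g -> stab_int a b g ->
     (tau g = 0 <-> exists x, a < x < b /\ g x = x)) /\
  (forall g, H g -> stab_int a b g ->
     (tau g > 0 <-> forall x, a < x < b -> g x > x)).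

(* Main.v *)
Require Import Defs.
From Stdlib Require Import Reals Lra Classical ClassicalEpsilon FunctionalExtensionality.
Open Scope R_scope.

Lemma h_mono f : homeo_plus f -> forall x y, 0 <= x -> x < y -> y <= 1 -> f x < f y.
Proof. intros [H _]; exact H. Qed.
Lemma h_range f : homeo_plus f -> forall x, 0 <= x <= 1 -> 0 <= f x <= 1.
Proof. intros [_ [H _]]; exact H. Qed.
Lemma h_surj f : homeo_plus f -> forall y, 0 <= y <= 1 -> exists x, 0 <= x <= 1 /\ f x = y.
Proof. intros [_ [_ [H _]]]; exact H. Qed.
Lemma h_out f : homeo_plus f -> forall x, (x < 0 \/ 1 < x) -> f x = x.
Proof. intros [_ [_ [_ H]]]; exact H. Qed.

Lemma h_le f (Hf : homeo_plus f) x y : 0 <= x -> x <= y -> y <= 1 -> f x <= f y.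
Proof.
  intros H1 H2 H3. destruct (Rle_lt_or_eq_dec _ _ H2) as [h|h].
  - left; apply (h_mono f Hf); auto.
  - subst; lra.
Qed.

Lemma h_lt_rev f (Hf : homeo_plus f) x y : 0 <= x <= 1 -> 0 <= y <= 1 -> f x < f y -> x < y.
Proof.
  intros Hx Hy H. destruct (Rlt_le_dec x y) as [h|h]; auto.
  pose proof (h_le f Hf y x ltac:(lra) h ltac:(lra)). lra.
Qed.

Lemma h_le_rev f (Hf : homeo_plus f) x y : 0 <= x <= 1 -> 0 <= y <= 1 -> f x <= f y -> x <= y.
Proof.
  intros Hx Hy H. destruct (Rle_lt_dec x y) as [h|h]; auto.
  pose proof (h_mono f Hf y x ltac:(lra) h ltac:(lra)). lra.
Qed.

Lemma h_0 f : homeo_plus f -> f 0 = 0.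
Proof.
  intros Hf. destruct (h_surj f Hf 0 ltac:(lra)) as [x [Hx Ex]].
  destruct (Rle_lt_or_eq_dec 0 x ltac:(lra)) as [h|h].
  - pose proof (h_mono f Hf 0 x ltac:(lra) h ltac:(lra)).
    pose proof (h_range f Hf 0 ltac:(lra)). lra.
  - subst; auto.
Qed.

Lemma h_1 f : homeo_plus f -> f 1 = 1.
Proof.
  intros Hf. destruct (h_surj f Hf 1 ltac:(lra)) as [x [Hx Ex]].
  destruct (Rle_lt_or_eq_dec x 1 ltac:(lra)) as [h|h].
  - pose proof (h_mono f Hf x 1 ltac:(lra) h ltac:(lra)).
    pose proof (h_range f Hf 1 ltac:(lra)). lra.
  - subst; auto.
Qed.

Lemma h_injR f (Hf : homeo_plus f) x y : f x = f y -> x = y.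
Proof.
  intros E.
  destruct (Rle_dec 0 x) as [a|a]; destruct (Rle_dec x 1) as [b|b];
  destruct (Rle_dec 0 y) as [c|c]; destruct (Rle_dec y 1) as [d|d].
  all: try (rewrite (h_out f Hf x) in E by lra).
  all: try (rewrite (h_out f Hf y) in E by lra).
  all: try lra.
  - apply Rle_antisym; apply (h_le_rev f Hf); lra.
  - pose proof (h_range f Hf x ltac:(lra)); lra.
  - pose proof (h_range f Hf x ltac:(lra)); lra.
  - pose proof (h_range f Hf y ltac:(lra)); lra.
  - pose proof (h_range f Hf y ltac:(lra)); lra.
Qed.

Lemma homeo_id : homeo_plus (fun x => x).
Proof.
  split; [|split; [|split]]; intros; try lra.
  exists y; split; auto.
Qed.

Lemma homeo_comp g h : homeo_plus g -> homeo_plus h -> homeo_plus (comp g h).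
Proof.
  intros Hg Hh; unfold comp; split; [|split; [|split]].
  - intros x y H1 H2 H3. apply (h_mono g Hg).
    + apply (h_range h Hh); lra.
    + apply (h_mono h Hh); lra.
    + apply (h_range h Hh); lra.
  - intros x Hx. apply (h_range g Hg). apply (h_range h Hh); lra.
  - intros y Hy. destruct (h_surj g Hg y Hy) as [x1 [H1 E1]].
    destruct (h_surj h Hh x1 H1) as [x [H2 E2]]. exists x; split; auto. rewrite E2; auto.
  - intros x Hx. rewrite (h_out h Hh x Hx). apply (h_out g Hg x Hx).
Qed.

Definition invp (f f' : R -> R) : Prop := forall x, f' (f x) = x /\ f (f' x) = x.

Lemma homeo_inv f f' : homeo_plus f -> invp f f' -> homeo_plus f'.
Proof.
  intros Hf Hi.
  assert (Hr : forall y, 0 <= y <= 1 -> 0 <= f' y <= 1).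
  { intros y Hy. destruct (Rle_dec 0 (f' y)); destruct (Rle_dec (f' y) 1); try (split; auto; fail).
    all: rewrite <- (proj2 (Hi y)) in Hy; rewrite (h_out f Hf) in Hy; lra. }
  split; [|split; [|split]].
  - intros x y H1 H2 H3.
    apply (h_lt_rev f Hf); try (apply Hr; lra).
    rewrite (proj2 (Hi x)), (proj2 (Hi y)); auto.
  - exact Hr.
  - intros y Hy. exists (f y); split; [apply (h_range f Hf); auto| apply Hi].
  - intros x Hx. destruct (Rle_dec 0 (f' x)); destruct (Rle_dec (f' x) 1).
    + pose proof (h_range f Hf (f' x) ltac:(lra)). rewrite (proj2 (Hi x)) in H. lra.
    + pose proof (proj2 (Hi x)). rewrite (h_out f Hf) in H by lra. auto.
    + pose proof (proj2 (Hi x)). rewrite (h_out f Hf) in H by lra. auto.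
    + pose proof (proj2 (Hi x)). rewrite (h_out f Hf) in H by lra. auto.
Qed.

Lemma homeo_has_inv f : homeo_plus f -> exists f', invp f f'.
Proof.
  intros Hf.
  assert (Hs : forall y, exists x, f x = y).
  { intros y. destruct (Rle_dec 0 y); destruct (Rle_dec y 1).
    - destruct (h_surj f Hf y ltac:(lra)) as [x [_ E]]; eauto.
    - exists y; apply (h_out f Hf); lra.
    - exists y; apply (h_out f Hf); lra.
    - exists y; apply (h_out f Hf); lra. }
  exists (fun y => proj1_sig (constructive_indefinite_description _ (Hs y))).
  intros x; split.
  - destruct (constructive_indefinite_description _ (Hs (f x))) as [z Hz]; simpl.
    apply (h_injR f Hf); auto.
  - destruct (constructive_indefinite_description _ (Hs x)) as [z Hz]; simpl; auto.
Qed.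

Lemma invp_sym f f' : invp f f' -> invp f' f.
Proof. intros H x; split; apply H. Qed.

Lemma h_cont_r f (Hf : homeo_plus f) x : 0 <= x <= 1 -> forall e, e > 0 ->
  exists d, d > 0 /\ forall y, x <= y <= 1 -> y < x + d -> f y < f x + e.
Proof.
  intros Hx e He. destruct (Rlt_le_dec x 1) as [h|h].
  - pose proof (h_mono f Hf x 1 ltac:(lra) h ltac:(lra)) as H1. rewrite (h_1 f Hf) in H1.
    pose proof (h_range f Hf x Hx).
    set (t := Rmin (f x + e/2) 1).
    assert (Ht1 : f x < t) by (unfold t; apply Rmin_case; lra).
    assert (Ht2 : t <= f x + e/2) by apply Rmin_l.
    assert (Ht3 : t <= 1) by apply Rmin_r.
    destruct (h_surj f Hf t ltac:(lra)) as [xr [Hxr Er]].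
    assert (x < xr) by (apply (h_lt_rev f Hf); auto; lra).
    exists (xr - x); split; [lra|]. intros y Hy Hy2.
    pose proof (h_mono f Hf y xr ltac:(lra) ltac:(lra) ltac:(lra)). lra.
  - exists 1; split; [lra|]. intros y Hy _. assert (y = x) by lra. subst; lra.
Qed.

Lemma h_cont_l f (Hf : homeo_plus f) x : 0 <= x <= 1 -> forall e, e > 0 ->
  exists d, d > 0 /\ forall y, 0 <= y <= x -> x - d < y -> f x - e < f y.
Proof.
  intros Hx e He. destruct (Rlt_le_dec 0 x) as [h|h].
  - pose proof (h_mono f Hf 0 x ltac:(lra) h ltac:(lra)) as H1. rewrite (h_0 f Hf) in H1.
    pose proof (h_range f Hf x Hx).
    set (t := Rmax (f x - e/2) 0).
    assert (Ht1 : t < f x) by (unfold t; apply Rmax_case; lra).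
    assert (Ht2 : f x - e/2 <= t) by apply Rmax_l.
    assert (Ht3 : 0 <= t) by apply Rmax_r.
    destruct (h_surj f Hf t ltac:(lra)) as [xl [Hxl El]].
    assert (xl < x) by (apply (h_lt_rev f Hf); auto; lra).
    exists (x - xl); split; [lra|]. intros y Hy Hy2.
    pose proof (h_mono f Hf xl y ltac:(lra) ltac:(lra) ltac:(lra)). lra.
  - exists 1; split; [lra|]. intros y Hy _. assert (y = x) by lra. subst; lra.
Qed.

Lemma fix_left f (Hf : homeo_plus f) x : 0 <= x <= 1 ->
  exists a, 0 <= a <= x /\ f a = a /\ forall y, a < y <= x -> f y <> y.
Proof.
  intros Hx.
  set (E := fun y => 0 <= y <= x /\ f y = y).
  assert (Hb : bound E) by (exists x; intros y [Hy _]; lra).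
  assert (Hne : exists y, E y) by (exists 0; split; [lra| apply (h_0 f Hf)]).
  destruct (completeness E Hb Hne) as [a [Hub Hlub]].
  assert (Ha0 : 0 <= a) by (apply Hub; split; [lra| apply (h_0 f Hf)]).
  assert (Hax : a <= x) by (apply Hlub; intros y [Hy _]; lra).
  assert (Hfa : f a = a).
  { destruct (Rtotal_order (f a) a) as [h|[h|h]]; auto; exfalso.
    - destruct (classic (exists y, E y /\ f a < y)) as [[y [[Hy1 Hy2] Hy3]]|N].
      + assert (y <= a) by (apply Hub; split; auto).
        pose proof (h_le f Hf y a ltac:(lra) ltac:(lra) ltac:(lra)). lra.
      + assert (a <= f a); [|lra]. apply Hlub. intros y Hy.
        destruct (Rle_dec y (f a)); auto. exfalso; apply N; exists y; split; auto; lra.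
    - destruct (h_cont_l f Hf a ltac:(lra) (f a - a) ltac:(lra)) as [d [Hd Hc]].
      destruct (classic (exists y, E y /\ a - d < y)) as [[y [[Hy1 Hy2] Hy3]]|N].
      + assert (y <= a) by (apply Hub; split; auto).
        pose proof (Hc y ltac:(lra) Hy3). lra.
      + assert (a <= a - d); [|lra]. apply Hlub. intros y Hy.
        destruct (Rle_dec y (a - d)); auto. exfalso; apply N; exists y; split; auto; lra. }
  exists a; repeat split; auto. intros y Hy Hfy.
  assert (y <= a) by (apply Hub; split; auto; lra). lra.
Qed.

Lemma fix_right f (Hf : homeo_plus f) x : 0 <= x <= 1 ->
  exists b, x <= b <= 1 /\ f b = b /\ forall y, x <= y < b -> f y <> y.
Proof.
  intros Hx.
  set (E := fun z => x <= - z <= 1 /\ f (- z) = - z).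
  assert (Hb : bound E) by (exists (- x); intros y [Hy _]; lra).
  assert (Hne : exists y, E y) by (exists (Ropp 1); unfold E; rewrite Ropp_involutive; split; [lra| apply (h_1 f Hf)]).
  destruct (completeness E Hb Hne) as [m [Hub Hlub]].
  set (b := - m).
  assert (Hb1 : b <= 1).
  { unfold b. assert (Ropp 1 <= m); [|lra]. apply Hub. unfold E; rewrite Ropp_involutive; split; [lra| apply (h_1 f Hf)]. }
  assert (Hbx : x <= b) by (unfold b; assert (m <= - x); [apply Hlub; intros y [Hy _]; lra| lra]).
  assert (HE : forall y, x <= y <= 1 -> f y = y -> b <= y).
  { intros y Hy Hfy. unfold b. assert (- y <= m); [|lra]. apply Hub. unfold E; rewrite Ropp_involutive; split; auto. }
  assert (Hfb : f b = b).
  { destruct (Rtotal_order (f b) b) as [h|[h|h]]; auto; exfalso.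
    - destruct (h_cont_r f Hf b ltac:(lra) (b - f b) ltac:(lra)) as [d [Hd Hc]].
      destruct (classic (exists y, x <= y <= 1 /\ f y = y /\ y < b + d)) as [[y [Hy1 [Hy2 Hy3]]]|N].
      + pose proof (HE y Hy1 Hy2). pose proof (Hc y ltac:(lra) Hy3). lra.
      + assert (m <= - (b + d)); [|unfold b in *; lra]. apply Hlub. intros z [Hz1 Hz2].
        destruct (Rle_dec z (- (b + d))); auto. exfalso; apply N; exists (- z); repeat split; auto; try lra.
    - destruct (classic (exists y, x <= y <= 1 /\ f y = y /\ y < f b)) as [[y [Hy1 [Hy2 Hy3]]]|N].
      + pose proof (HE y Hy1 Hy2).
        pose proof (h_le f Hf b y ltac:(lra) ltac:(lra) ltac:(lra)). lra.
      + assert (m <= - f b); [|unfold b in *; lra]. apply Hlub. intros z [Hz1 Hz2].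
        destruct (Rle_dec z (- f b)); auto. exfalso; apply N; exists (- z); repeat split; auto; try lra. }
  exists b; repeat split; auto. intros y Hy Hfy. pose proof (HE y ltac:(lra) Hfy). lra.
Qed.

Lemma COMP f (Hf : homeo_plus f) x : 0 <= x <= 1 -> f x <> x ->
  exists a b, succ_fix f a b /\ a < x < b.
Proof.
  intros Hx Hn.
  destruct (fix_left f Hf x Hx) as [a [Ha [Hfa Hla]]].
  destruct (fix_right f Hf x Hx) as [b [Hb [Hfb Hrb]]].
  assert (a <> x) by (intro; subst; auto). assert (b <> x) by (intro; subst; auto).
  exists a, b; split; [|lra].
  unfold succ_fix; repeat split; try lra; auto.
  intros y Hy. destruct (Rle_dec y x); [apply Hla| apply Hrb]; lra.
Qed.

Lemma agree_right f g (Hf : homeo_plus f) (Hg : homeo_plus g) x eta :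
  0 <= x < 1 -> eta > 0 -> (forall y, x < y < x + eta -> f y = g y) -> f x = g x.
Proof.
  intros Hx He Hag.
  assert (key : forall f g, homeo_plus f -> homeo_plus g -> (forall y, x < y < x + eta -> f y = g y) -> ~ f x > g x).
  { clear f g Hf Hg Hag. intros f g Hf Hg Hag H.
    destruct (h_cont_r g Hg x ltac:(lra) (f x - g x) ltac:(lra)) as [d [Hd Hc]].
    set (y := x + Rmin (Rmin d eta) (1 - x) / 2).
    assert (Hm1 : Rmin (Rmin d eta) (1 - x) <= d) by (eapply Rle_trans; apply Rmin_l).
    assert (Hm2 : Rmin (Rmin d eta) (1 - x) <= eta) by (eapply Rle_trans; [apply Rmin_l| apply Rmin_r]).
    assert (Hm3 : Rmin (Rmin d eta) (1 - x) <= 1 - x) by apply Rmin_r.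
    assert (Hm4 : 0 < Rmin (Rmin d eta) (1 - x)) by (repeat apply Rmin_case; lra).
    pose proof (Hc y ltac:(unfold y; lra) ltac:(unfold y; lra)).
    pose proof (h_le f Hf x y ltac:(lra) ltac:(unfold y; lra) ltac:(unfold y; lra)).
    rewrite (Hag y ltac:(unfold y; lra)) in H1. lra. }
  destruct (Rtotal_order (f x) (g x)) as [h|[h|h]]; auto; exfalso.
  - apply (key g f Hg Hf); [intros; symmetry; auto| lra].
  - apply (key f g Hf Hg); auto.
Qed.

Lemma agree_left f g (Hf : homeo_plus f) (Hg : homeo_plus g) x eta :
  0 < x <= 1 -> eta > 0 -> (forall y, x - eta < y < x -> f y = g y) -> f x = g x.
Proof.
  intros Hx He Hag.
  assert (key : forall f g, homeo_plus f -> homeo_plus g -> (forall y, x - eta < y < x -> f y = g y) -> ~ f x < g x).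
  { clear f g Hf Hg Hag. intros f g Hf Hg Hag H.
    destruct (h_cont_l g Hg x ltac:(lra) (g x - f x) ltac:(lra)) as [d [Hd Hc]].
    set (y := x - Rmin (Rmin d eta) x / 2).
    assert (Hm1 : Rmin (Rmin d eta) x <= d) by (eapply Rle_trans; apply Rmin_l).
    assert (Hm2 : Rmin (Rmin d eta) x <= eta) by (eapply Rle_trans; [apply Rmin_l| apply Rmin_r]).
    assert (Hm3 : Rmin (Rmin d eta) x <= x) by apply Rmin_r.
    assert (Hm4 : 0 < Rmin (Rmin d eta) x) by (repeat apply Rmin_case; lra).
    pose proof (Hc y ltac:(unfold y; lra) ltac:(unfold y; lra)).
    pose proof (h_le f Hf y x ltac:(unfold y; lra) ltac:(unfold y; lra) ltac:(lra)).
    rewrite (Hag y ltac:(unfold y; lra)) in H1. lra. }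
  destruct (Rtotal_order (f x) (g x)) as [h|[h|h]]; auto; exfalso.
  - apply (key f g Hf Hg); auto.
  - apply (key g f Hg Hf); [intros; symmetry; auto| lra].
Qed.

Lemma induced_all g h (Hg : homeo_plus g) (Hi : induced g h) e e' :
  succ_fix g e e' ->
  (forall z, e <= z <= e' -> h z = g z) \/ (forall z, e <= z <= e' -> h z = z).
Proof.
  intros Hs. destruct Hi as [Hh Hi].
  destruct Hs as [He0 [Hee [He1 [Hge [Hge' Hgn]]]]].
  destruct (classic (forall z, e <= z <= e' -> h z = g z)) as [A|A]; [left; auto| right].
  intros z Hz. destruct (classic (h z = z)) as [B|B]; auto. exfalso.
  destruct (Hi z ltac:(lra)) as [C|C]; [contradiction|].
  apply not_all_ex_not in A. destruct A as [z1 A].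
  apply imply_to_and in A. destruct A as [Hz1 A].
  destruct (Hi z1 ltac:(lra)) as [D|D]; [|contradiction].
  assert (Hz1i : e < z1 < e').
  { split; apply Rnot_le_lt; intro; assert (z1 = e \/ z1 = e') as [->| ->] by lra; apply A; rewrite D; auto. }
  assert (Hzi : e < z < e').
  { split; apply Rnot_le_lt; intro; assert (z = e \/ z = e') as [->| ->] by lra; apply B; rewrite C; auto. }
  destruct (Rtotal_order z1 z) as [L|[L|L]].
  - destruct (COMP h Hh z ltac:(lra) B) as [a [b [[Ha0 [Hab [Hb1 [Hha [Hhb Hhn]]]]] Hx]]].
    assert (z1 <= a) by (destruct (Rle_dec z1 a); auto; exfalso; apply (Hhn z1); auto; lra).
    assert (h a = g a).
    { apply (agree_right h g Hh Hg a (z - a)); try lra.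
      intros y Hy. destruct (Hi y ltac:(lra)) as [F|F]; auto. exfalso; apply (Hhn y); auto; lra. }
    apply (Hgn a); lra.
  - subst; contradiction.
  - destruct (COMP h Hh z ltac:(lra) B) as [a [b [[Ha0 [Hab [Hb1 [Hha [Hhb Hhn]]]]] Hx]]].
    assert (b <= z1) by (destruct (Rle_dec b z1); auto; exfalso; apply (Hhn z1); auto; lra).
    assert (h b = g b).
    { apply (agree_left h g Hh Hg b (b - z)); try lra.
      intros y Hy. destruct (Hi y ltac:(lra)) as [F|F]; auto. exfalso; apply (Hhn y); auto; lra. }
    apply (Hgn b); lra.
Qed.

Definition Lam (G : (R -> R) -> Prop) (w : R -> R) : Prop :=
  forall r s, succ_fix w r s -> sfp G r s.

Lemma G_homeo G (HG : is_group G) g : G g -> homeo_plus g.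
Proof. destruct HG as [H _]; auto. Qed.
Lemma G_id G (HG : is_group G) : G (fun x => x).
Proof. destruct HG as [_ [H _]]; auto. Qed.
Lemma G_comp G (HG : is_group G) g h : G g -> G h -> G (comp g h).
Proof. destruct HG as [_ [_ [H _]]]; auto. Qed.
Lemma G_inv G (HG : is_group G) g : G g -> exists g', G g' /\ invp g g'.
Proof. destruct HG as [_ [_ [_ H]]]. intros Hg. destruct (H g Hg) as [g' [A B]]. exists g'; split; auto. Qed.
Lemma Lam_G G g : G g -> Lam G g.
Proof. intros Hg r s Hs. exists g; auto. Qed.

Lemma link1 a b c d : a < c < b -> ~ (a < d < b) -> linked a b c d.
Proof. intros H1 H2. left; left. unfold in_open; split; auto; lra. Qed.
Lemma link2 a b c d : ~ (a < c < b) -> a < d < b -> linked a b c d.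
Proof. intros H1 H2. left; right. unfold in_open; split; auto; lra. Qed.

Lemma sfp_bounds G c d : sfp G c d -> 0 <= c /\ c < d /\ d <= 1.
Proof. intros [g [_ [A [B [C _]]]]]. auto. Qed.

Lemma STAB G (HL : without_linked G) w (Hw : homeo_plus w) (Lw : Lam G w) c d
  (Hcd : sfp G c d) p : c < p < d -> w p = p -> w c = c /\ w d = d.
Proof.
  intros Hp Hwp. pose proof (sfp_bounds G c d Hcd) as Hb. split.
  - destruct (classic (w c = c)) as [A|A]; auto. exfalso.
    destruct (COMP w Hw c ltac:(lra) A) as [r [s [Hs Hrs]]].
    pose proof Hs as [_ [_ [_ [_ [_ Hn]]]]].
    assert (s <= p) by (destruct (Rle_dec s p); auto; exfalso; apply (Hn p); auto; lra).
    apply (HL r s c d (Lw r s Hs) Hcd). apply link1; lra.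
  - destruct (classic (w d = d)) as [A|A]; auto. exfalso.
    destruct (COMP w Hw d ltac:(lra) A) as [r [s [Hs Hrs]]].
    pose proof Hs as [_ [_ [_ [_ [_ Hn]]]]].
    assert (p <= r) by (destruct (Rle_dec p r); auto; exfalso; apply (Hn p); auto; lra).
    apply (HL r s c d (Lw r s Hs) Hcd). apply link2; lra.
Qed.

Lemma FP G (HL : without_linked G) k1 k2 (H1 : homeo_plus k1) (H2 : homeo_plus k2)
  (L1 : Lam G k1) (L2 : Lam G k2) c d (Hcd : sfp G c d) :
  k2 c = c -> k2 d = d ->
  (exists p, c < p < d /\ k1 p = p) -> (exists p, c < p < d /\ k2 p = p) ->
  exists p, c < p < d /\ k1 p = p /\ k2 p = p.
Proof.
  intros Hc Hd [p1 [Hp1 E1]] [p2 [Hp2 E2]].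
  pose proof (sfp_bounds G c d Hcd) as Hb.
  destruct (classic (k2 p1 = p1)) as [A|A]; [exists p1; auto|].
  destruct (COMP k2 H2 p1 ltac:(lra) A) as [e [e' [Hs He]]].
  pose proof Hs as [He0 [Hee [He1 [Hfe [Hfe' Hn]]]]].
  assert (c <= e) by (destruct (Rle_dec c e); auto; exfalso; apply (Hn c); auto; lra).
  assert (e' <= d) by (destruct (Rle_dec e' d); auto; exfalso; apply (Hn d); auto; lra).
  assert (c < e).
  { destruct (Rle_lt_or_eq_dec c e ltac:(lra)) as [h|h]; auto. exfalso. subst e.
    destruct (Rle_lt_or_eq_dec e' d ltac:(lra)) as [h|h].
    - apply (HL c d c e' Hcd (L2 c e' Hs)). apply link2; lra.
    - subst e'. apply (Hn p2); auto. }
  destruct (classic (k1 e = e)) as [B|B]; [exists e; repeat split; auto; lra|].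
  exfalso.
  destruct (COMP k1 H1 e ltac:(lra) B) as [r [s [Hs' Hrs]]].
  pose proof Hs' as [_ [_ [_ [_ [_ Hn']]]]].
  assert (s <= p1) by (destruct (Rle_dec s p1); auto; exfalso; apply (Hn' p1); auto; lra).
  apply (HL r s e e' (L1 r s Hs') (L2 e e' Hs)). apply link1; lra.
Qed.

Definition KK (G : (R -> R) -> Prop) (c d : R) (k : R -> R) : Prop :=
  G k /\ k c = c /\ k d = d /\ exists p, c < p < d /\ k p = p.

Lemma KK_comp G (HG : is_group G) (HL : without_linked G) c d (Hcd : sfp G c d) k1 k2 :
  KK G c d k1 -> KK G c d k2 -> KK G c d (comp k1 k2).
Proof.
  intros [G1 [c1 [d1 P1]]] [G2 [c2 [d2 P2]]].
  destruct (FP G HL k1 k2 (G_homeo G HG k1 G1) (G_homeo G HG k2 G2) (Lam_G G k1 G1) (Lam_G G k2 G2)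
    c d Hcd c2 d2 P1 P2) as [p [Hp [E1 E2]]].
  split; [apply G_comp; auto|]. unfold comp. rewrite c2, d2, c1, d1. repeat split; auto.
  exists p; split; auto. rewrite E2; auto.
Qed.

Lemma KK_inv G c d k k' : KK G c d k -> G k' -> invp k k' -> KK G c d k'.
Proof.
  intros [Gk [Hc [Hd [p [Hp Ep]]]]] Gk' Hi. split; auto.
  rewrite <- Hc at 1. rewrite (proj1 (Hi c)). rewrite <- Hd at 1. rewrite (proj1 (Hi d)).
  repeat split; auto. exists p; split; auto. rewrite <- Ep at 1. apply Hi.
Qed.

Lemma KK_id G (HG : is_group G) c d : c < d -> KK G c d (fun x => x).
Proof. intros H. split; [apply G_id; auto|]. repeat split; auto. exists ((c+d)/2); split; auto; lra. Qed.

Lemma KK_ext G c d k k' : G k' -> (forall x, k x = k' x) -> KK G c d k -> KK G c d k'.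
Proof.
  intros Gk' E [Gk [Hc [Hd [p [Hp Ep]]]]]. split; auto.
  rewrite <- !E. repeat split; auto. exists p; rewrite <- E; auto.
Qed.

Lemma conj_sfp G (HG : is_group G) g g' u c d : G g -> G g' -> invp g g' -> G u -> succ_fix u c d ->
  sfp G (g c) (g d).
Proof.
  intros Gg Gg' Hi Gu [Hc0 [Hcd [Hd1 [Huc [Hud Hn]]]]].
  pose proof (G_homeo G HG g Gg) as Hg. pose proof (G_homeo G HG g' Gg') as Hg'.
  exists (comp g (comp u g')). split; [apply G_comp; auto; apply G_comp; auto|].
  unfold comp. repeat split.
  - pose proof (h_range g Hg c ltac:(lra)); lra.
  - apply (h_mono g Hg); lra.
  - pose proof (h_range g Hg d ltac:(lra)); lra.
  - rewrite (proj1 (Hi c)), Huc; auto.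
  - rewrite (proj1 (Hi d)), Hud; auto.
  - intros x Hx E.
    assert (Hx01 : 0 <= x <= 1).
    { pose proof (h_range g Hg c ltac:(lra)); pose proof (h_range g Hg d ltac:(lra)); lra. }
    assert (c < g' x < d).
    { split; apply (h_lt_rev g Hg); try (apply (h_range g' Hg'); auto); try lra;
      rewrite (proj2 (Hi x)); lra. }
    apply (Hn (g' x)); auto.
    rewrite <- (proj1 (Hi (u (g' x)))). rewrite E. reflexivity.
Qed.

Definition CL (G : (R -> R) -> Prop) (f gam : R -> R) (c d : R) : Prop :=
  forall u w, c <= u -> u < w -> w <= d -> exists u' w' k, u <= u' /\ u' < w' /\ w' <= w /\
    KK G c d k /\ forall z, u' < z < w' -> f z = gam (k z).
Definition OP (G : (R -> R) -> Prop) (f : R -> R) : Prop :=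
  forall x, 0 <= x <= 1 -> exists g, G g /\ f x = g x.
Definition PT0 (G : (R -> R) -> Prop) (f : R -> R) : Prop :=
  forall u w, 0 <= u -> u < w -> w <= 1 -> exists u' w' g, u <= u' /\ u' < w' /\ w' <= w /\
    G g /\ forall z, u' < z < w' -> f z = g z.
Definition PT (G : (R -> R) -> Prop) (f : R -> R) : Prop :=
  forall c d, sfp G c d -> forall x, c < x < d -> exists g, G g /\ g x = f x /\ g c = f c /\
    g d = f d /\ CL G f g c d.
Definition good (G : (R -> R) -> Prop) (f : R -> R) : Prop :=
  homeo_plus f /\ OP G f /\ PT0 G f /\ PT G f.

Lemma good_G G (HG : is_group G) g : G g -> good G g.
Proof.
  intros Gg. split; [apply (G_homeo G HG); auto|]. split; [|split].
  - intros x _. exists g; auto.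
  - intros u w H1 H2 H3. exists u, w, g. repeat split; auto; lra.
  - intros c d Hcd x Hx. exists g. repeat split; auto.
    intros u w H1 H2 H3. exists u, w, (fun x => x). split; [lra|]. split; [lra|]. split; [lra|].
    split; [apply KK_id; auto; pose proof (sfp_bounds G c d Hcd); lra|]. auto.
Qed.

Lemma pullback rho rho' (Hr : homeo_plus rho) (Hi : invp rho rho') u2 w2 u1 w1 :
  0 <= u2 -> u2 < w2 -> w2 <= 1 -> rho u2 <= u1 -> u1 < w1 -> w1 <= rho w2 ->
  u2 <= rho' u1 /\ rho' u1 < rho' w1 /\ rho' w1 <= w2 /\
  forall z, rho' u1 < z < rho' w1 -> u2 < z < w2 /\ u1 < rho z < w1.
Proof.
  intros H1 H2 H3 H4 H5 H6.
  pose proof (homeo_inv rho rho' Hr Hi) as Hr'.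
  pose proof (h_range rho Hr u2 ltac:(lra)). pose proof (h_range rho Hr w2 ltac:(lra)).
  pose proof (h_range rho' Hr' u1 ltac:(lra)). pose proof (h_range rho' Hr' w1 ltac:(lra)).
  assert (A1 : u2 <= rho' u1) by (apply (h_le_rev rho Hr); try lra; rewrite (proj2 (Hi u1)); lra).
  assert (A2 : rho' u1 < rho' w1) by (apply (h_mono rho' Hr'); lra).
  assert (A3 : rho' w1 <= w2) by (apply (h_le_rev rho Hr); try lra; rewrite (proj2 (Hi w1)); lra).
  repeat split; auto.
  - lra.
  - lra.
  - rewrite <- (proj2 (Hi u1)). apply (h_mono rho Hr); lra.
  - rewrite <- (proj2 (Hi w1)). apply (h_mono rho Hr); lra.
Qed.

Lemma KK_conj G (HG : is_group G) c d c' d' k g g' :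
  sfp G c d -> sfp G c' d' ->
  KK G c' d' k -> G g -> G g' -> invp g g' -> g c = c' -> g d = d' ->
  KK G c d (comp g' (comp k g)).
Proof.
  intros Hcd Hcd' [Gk [Hc [Hd [p [Hp Ep]]]]] Gg Gg' Hi Ec Ed.
  pose proof (sfp_bounds G c d Hcd). pose proof (sfp_bounds G c' d' Hcd').
  pose proof (G_homeo G HG g Gg) as Hg. pose proof (G_homeo G HG g' Gg') as Hg'.
  split; [apply G_comp; auto; apply G_comp; auto|]. unfold comp.
  rewrite Ec, Ed, Hc, Hd, <- Ec, <- Ed, (proj1 (Hi c)), (proj1 (Hi d)).
  repeat split; auto. exists (g' p). split.
  - split; apply (h_lt_rev g Hg); try (apply (h_range g' Hg'); lra); try lra; rewrite (proj2 (Hi p)); lra.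
  - rewrite (proj2 (Hi p)), Ep; auto.
Qed.

Lemma good_comp G (HG : is_group G) (HL : without_linked G) f1 f2 :
  good G f1 -> good G f2 -> good G (comp f1 f2).
Proof.
  intros [Hf1 [O1 [Z1 T1]]] [Hf2 [O2 [Z2 T2]]].
  split; [apply homeo_comp; auto|]. split; [|split].
  - intros x Hx. destruct (O2 x Hx) as [g2 [Gg2 E2]].
    destruct (O1 (f2 x) (h_range f2 Hf2 x Hx)) as [g1 [Gg1 E1]].
    exists (comp g1 g2); split; [apply G_comp; auto|]. unfold comp. rewrite E1, E2; auto.
  - intros u w H1 H2 H3. destruct (Z2 u w H1 H2 H3) as [u2 [w2 [g2 [A1 [A2 [A3 [Gg2 E2]]]]]]].
    pose proof (G_homeo G HG g2 Gg2) as Hg2.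
    destruct (G_inv G HG g2 Gg2) as [g2' [Gg2' Hi2]].
    pose proof (h_mono g2 Hg2 u2 w2 ltac:(lra) A2 ltac:(lra)).
    pose proof (h_range g2 Hg2 u2 ltac:(lra)). pose proof (h_range g2 Hg2 w2 ltac:(lra)).
    destruct (Z1 (g2 u2) (g2 w2) ltac:(lra) ltac:(lra) ltac:(lra)) as [u1 [w1 [g1 [B1 [B2 [B3 [Gg1 E1]]]]]]].
    destruct (pullback g2 g2' Hg2 Hi2 u2 w2 u1 w1 ltac:(lra) A2 ltac:(lra) B1 B2 B3) as [C1 [C2 [C3 C4]]].
    exists (g2' u1), (g2' w1), (comp g1 g2). repeat split; try lra.
    + apply G_comp; auto.
    + intros z Hz. destruct (C4 z Hz) as [D1 D2]. unfold comp. rewrite E2 by lra. apply E1; lra.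
  - intros c d Hcd x Hx.
    pose proof (sfp_bounds G c d Hcd) as Bcd.
    destruct (T2 c d Hcd x Hx) as [g2 [Gg2 [Ex2 [Ec2 [Ed2 CL2]]]]].
    pose proof (G_homeo G HG g2 Gg2) as Hg2.
    destruct (G_inv G HG g2 Gg2) as [g2' [Gg2' Hi2]].
    assert (Hcd' : sfp G (g2 c) (g2 d)).
    { destruct Hcd as [u [Gu Su]]. apply (conj_sfp G HG g2 g2' u); auto. }
    pose proof (sfp_bounds G _ _ Hcd') as Bcd'.
    assert (Hx' : g2 c < f2 x < g2 d).
    { rewrite <- Ex2. split; apply (h_mono g2 Hg2); lra. }
    destruct (T1 (g2 c) (g2 d) Hcd' (f2 x) Hx') as [g1 [Gg1 [Ex1 [Ec1 [Ed1 CL1]]]]].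
    exists (comp g1 g2). split; [apply G_comp; auto|]. unfold comp.
    rewrite Ex2, Ex1, Ec2, Ed2, <- Ec2, <- Ed2, Ec1, Ed1. repeat split; auto.
    intros u w H1 H2 H3.
    destruct (CL2 u w H1 H2 H3) as [u2 [w2 [k2 [A1 [A2 [A3 [Kk2 E2]]]]]]].
    pose proof Kk2 as [Gk2 [Hk2c [Hk2d _]]].
    pose proof (G_homeo G HG k2 Gk2) as Hk2.
    destruct (G_inv G HG k2 Gk2) as [k2' [Gk2' Hik2]].
    set (rho := comp g2 k2). set (rho' := comp k2' g2').
    assert (Hrho : homeo_plus rho) by (apply homeo_comp; auto).
    assert (Hirho : invp rho rho').
    { intros z; unfold rho, rho', comp. rewrite (proj1 (Hi2 (k2 z))), (proj1 (Hik2 z)).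
      rewrite (proj2 (Hik2 (g2' z))), (proj2 (Hi2 z)). auto. }
    assert (R1 : g2 c <= rho u2).
    { unfold rho, comp. assert (c <= k2 u2) by (rewrite <- Hk2c at 1; apply (h_le k2 Hk2); lra).
      pose proof (h_range k2 Hk2 u2 ltac:(lra)). apply (h_le g2 Hg2); lra. }
    assert (R2 : rho w2 <= g2 d).
    { unfold rho, comp. assert (k2 w2 <= d) by (rewrite <- Hk2d; apply (h_le k2 Hk2); lra).
      pose proof (h_range k2 Hk2 w2 ltac:(lra)). apply (h_le g2 Hg2); lra. }
    assert (R3 : rho u2 < rho w2) by (apply (h_mono rho Hrho); lra).
    destruct (CL1 (rho u2) (rho w2) R1 R3 R2) as [u1 [w1 [k1 [B1 [B2 [B3 [Kk1 E1]]]]]]].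
    destruct (pullback rho rho' Hrho Hirho u2 w2 u1 w1 ltac:(lra) A2 ltac:(lra) B1 B2 B3) as [C1 [C2 [C3 C4]]].
    exists (rho' u1), (rho' w1), (comp (comp g2' (comp k1 g2)) k2).
    split; [lra|]. split; [lra|]. split; [lra|]. split.
    + apply KK_comp; auto. apply (KK_conj G HG c d (g2 c) (g2 d) k1 g2 g2'); auto.
    + intros z Hz. destruct (C4 z Hz) as [D1 D2]. unfold comp.
      rewrite (proj2 (Hi2 (k1 (g2 (k2 z))))).
      rewrite E2 by lra. apply E1. exact D2.
Qed.

Lemma KK_bounds G c d k : KK G c d k -> (forall x, G x -> homeo_plus x) -> 0 <= c -> d <= 1 ->
  forall z, c < z < d -> c < k z < d.
Proof.
  intros [Gk [Hc [Hd _]]] HGh H0 H1 z Hz. pose proof (HGh k Gk) as Hk.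
  split; [rewrite <- Hc at 1| rewrite <- Hd]; apply (h_mono k Hk); lra.
Qed.

Lemma CL_shift G (HG : is_group G) (HL : without_linked G) c d h gam :
  sfp G c d -> CL G h (fun x => x) c d -> KK G c d gam -> CL G h gam c d.
Proof.
  intros Hcd Hcl Kg u w H1 H2 H3.
  destruct (Hcl u w H1 H2 H3) as [u' [w' [k [A1 [A2 [A3 [Kk E]]]]]]].
  destruct (G_inv G HG gam (proj1 Kg)) as [gam' [Gg' Hi]].
  exists u', w', (comp gam' k). split; [lra|]. split; [lra|]. split; [lra|]. split.
  - apply KK_comp; auto. apply (KK_inv G c d gam); auto.
  - intros z Hz. unfold comp. rewrite (proj2 (Hi (k z))). auto.
Qed.

Lemma H_noq G (HG : is_group G) (HL : without_linked G) f (T : PT G f) gam c d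
  (Gg : G gam) (Sg : succ_fix gam c d) u2 w2 :
  c <= u2 -> u2 < w2 -> w2 <= d -> (forall z, u2 < z < w2 -> f z = gam z) ->
  forall q, c < q < d -> f q = q -> f c = c -> f d = d -> False.
Proof.
  intros H1 H2 H3 E q Hq Fq Fc Fd.
  assert (Hcd : sfp G c d) by (exists gam; auto).
  pose proof Sg as [Sc0 [Scd [Sd1 [Sgc [Sgd Sn]]]]].
  destruct (T c d Hcd q Hq) as [ga [Gga [Eq [Ec [Ed CLa]]]]].
  rewrite Fq in Eq. rewrite Fc in Ec. rewrite Fd in Ed.
  assert (Ka : KK G c d ga) by (split; auto; repeat split; auto; exists q; auto).
  destruct (CLa u2 w2 H1 H2 H3) as [u3 [w3 [k3 [A1 [A2 [A3 [K3 E3]]]]]]].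
  set (z3 := (u3 + w3) / 2).
  destruct (G_inv G HG ga Gga) as [ga' [Gga' Hia]].
  destruct (G_inv G HG k3 (proj1 K3)) as [k3' [Gk3' Hik3]].
  pose proof (KK_inv G c d ga ga' Ka Gga' Hia) as Ka'.
  pose proof (KK_inv G c d k3 k3' K3 Gk3' Hik3) as K3'.
  set (v := comp k3' (comp ga' gam)).
  assert (Kv : KK G c d v).
  { split; [apply G_comp; auto; apply G_comp; auto|]. unfold v, comp.
    destruct Ka' as [_ [Ac [Ad _]]]. destruct K3' as [_ [Bc [Bd _]]].
    rewrite Sgc, Sgd, Ac, Ad, Bc, Bd. repeat split; auto.
    exists z3. split; [unfold z3; lra|].
    rewrite <- E by (unfold z3; lra). rewrite E3 by (unfold z3; lra).
    rewrite (proj1 (Hia (k3 z3))). apply Hik3. }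
  assert (Kg : KK G c d gam).
  { apply (KK_ext G c d (comp ga (comp k3 v))); auto.
    - intros x. unfold v, comp. rewrite (proj2 (Hik3 (ga' (gam x)))). apply Hia.
    - apply KK_comp; auto. apply KK_comp; auto. }
  destruct Kg as [_ [_ [_ [p [Hp Ep]]]]]. apply (Sn p); auto.
Qed.

Lemma good_Lambda G (HG : is_group G) (HL : without_linked G) f : good G f -> Lam G f.
Proof.
  intros [Hf [O [Z T]]] a b Sab.
  pose proof Sab as [Ha0 [Hab [Hb1 [Fa [Fb Hn]]]]].
  destruct (Z a b Ha0 Hab Hb1) as [u' [w' [gam [A1 [A2 [A3 [Gg Eg]]]]]]].
  pose proof (G_homeo G HG gam Gg) as Hgam.
  set (y := (u' + w') / 2).
  assert (Hy : gam y <> y) by (rewrite <- Eg by (unfold y; lra); apply Hn; unfold y; lra).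
  destruct (COMP gam Hgam y ltac:(unfold y; lra) Hy) as [c [d [Sg Hcy]]].
  pose proof Sg as [Sc0 [Scd [Sd1 [Sgc [Sgd Sn]]]]].
  assert (Hcd : sfp G c d) by (exists gam; auto).
  destruct (T c d Hcd y Hcy) as [g1 [Gg1 [_ [Ec1 [Ed1 CL1]]]]].
  destruct (CL1 (Rmax u' c) (Rmin w' d)) as [u2 [w2 [k [B1 [B2 [B3 [Kk E]]]]]]].
  { apply Rmax_r. }
  { apply Rmax_case; apply Rmin_case; unfold y in *; lra. }
  { apply Rmin_r. }
  assert (Hm1 : u' <= Rmax u' c) by apply Rmax_l. assert (Hm2 : c <= Rmax u' c) by apply Rmax_r.
  assert (Hm3 : Rmin w' d <= w') by apply Rmin_l. assert (Hm4 : Rmin w' d <= d) by apply Rmin_r.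
  set (z := (u2 + w2) / 2).
  destruct (G_inv G HG gam Gg) as [gam' [Gg' Hi]].
  set (w := comp gam' (comp g1 k)).
  assert (Gw : G w) by (apply G_comp; auto; apply G_comp; auto; apply Kk).
  assert (Wz : w z = z).
  { unfold w, comp. rewrite <- E by (unfold z; lra). rewrite Eg by (unfold z; lra). apply Hi. }
  destruct (STAB G HL w (G_homeo G HG w Gw) (Lam_G G w Gw) c d Hcd z ltac:(unfold z; lra) Wz) as [Wc Wd].
  destruct Kk as [_ [Kc [Kd _]]].
  assert (Fc : f c = c).
  { rewrite <- Ec1. unfold w, comp in Wc. rewrite Kc in Wc.
    rewrite <- (proj2 (Hi (g1 c))). rewrite Wc. auto. }
  assert (Fd : f d = d).
  { rewrite <- Ed1. unfold w, comp in Wd. rewrite Kd in Wd.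
    rewrite <- (proj2 (Hi (g1 d))). rewrite Wd. auto. }
  assert (c <= a) by (destruct (Rle_dec c a); auto; exfalso; apply (Hn c); auto; unfold y in *; lra).
  assert (b <= d) by (destruct (Rle_dec b d); auto; exfalso; apply (Hn d); auto; unfold y in *; lra).
  assert (Eg2 : forall z, u2 < z < w2 -> f z = gam z) by (intros; apply Eg; lra).
  assert (c = a).
  { destruct (Rle_lt_or_eq_dec c a ltac:(lra)) as [h|h]; auto. exfalso.
    apply (H_noq G HG HL f T gam c d Gg Sg u2 w2 ltac:(lra) B2 ltac:(lra) Eg2 a); auto; unfold y in *; lra. }
  assert (d = b).
  { destruct (Rle_lt_or_eq_dec b d ltac:(lra)) as [h|h]; auto. exfalso.
    apply (H_noq G HG HL f T gam c d Gg Sg u2 w2 ltac:(lra) B2 ltac:(lra) Eg2 b); auto; unfold y in *; lra. }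
  subst. exists gam; auto.
Qed.

Lemma induced_good G (HG : is_group G) (HL : without_linked G) g h :
  good G g -> Lam G g -> induced g h -> good G h.
Proof.
  intros Hgood Lg Hind. pose proof Hgood as [Hg [Og [Zg Tg]]].
  pose proof Hind as [Hh Hi].
  split; [auto|]. split; [|split].
  - intros x Hx. destruct (Hi x Hx) as [E|E].
    + exists (fun x => x); split; auto. apply (G_id G HG).
    + destruct (Og x Hx) as [gam [Gg E2]]. exists gam; split; auto; congruence.
  - intros u w H1 H2 H3.
    destruct (classic (exists z, u < z < w /\ g z <> z)) as [[z [Hz Nz]]|N].
    + destruct (COMP g Hg z ltac:(lra) Nz) as [e [e' [Se Hze]]].
      pose proof Se as [Se0 [See [Se1 _]]].
      set (u1 := Rmax u e). set (w1 := Rmin w e').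
      assert (Hm1 : u <= u1) by apply Rmax_l. assert (Hm2 : e <= u1) by apply Rmax_r.
      assert (Hm3 : w1 <= w) by apply Rmin_l. assert (Hm4 : w1 <= e') by apply Rmin_r.
      assert (Hm5 : u1 < w1) by (unfold u1, w1; apply Rmax_case; apply Rmin_case; lra).
      destruct (induced_all g h Hg Hind e e' Se) as [A|A].
      * destruct (Zg u1 w1 ltac:(lra) Hm5 ltac:(lra)) as [u' [w' [gam [B1 [B2 [B3 [Gg E]]]]]]].
        exists u', w', gam. repeat split; auto; try lra.
        intros z0 Hz0. rewrite A by lra. auto.
      * exists u1, w1, (fun x => x). repeat split; auto; try lra. apply (G_id G HG).
        intros z0 Hz0. apply A; lra.
    + exists u, w, (fun x => x). repeat split; auto; try lra. apply (G_id G HG).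
      intros z Hz. destruct (Hi z ltac:(lra)) as [E|E]; auto. rewrite E.
      destruct (classic (g z = z)); auto. exfalso; apply N; exists z; auto.
  - intros c d Hcd x Hx.
    pose proof (sfp_bounds G c d Hcd) as Bcd.
    destruct (classic (exists q, c < q < d /\ g q = q)) as [[q [Hq Eq]]|N].
    + destruct (STAB G HL g Hg Lg c d Hcd q Hq Eq) as [Gc Gd].
      assert (Hc : h c = c) by (destruct (Hi c ltac:(lra)) as [E|E]; congruence).
      assert (Hd : h d = d) by (destruct (Hi d ltac:(lra)) as [E|E]; congruence).
      destruct (Tg c d Hcd q Hq) as [gq [Ggq [Eqq [Ecq [Edq CLq]]]]].
      rewrite Eq in Eqq. rewrite Gc in Ecq. rewrite Gd in Edq.
      assert (Kq : KK G c d gq) by (split; auto; repeat split; auto; exists q; auto).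
      assert (CLK : CL G h (fun x => x) c d).
      { intros u w H1 H2 H3.
        destruct (classic (exists z, u < z < w /\ g z <> z)) as [[z [Hz Nz]]|N].
        - destruct (COMP g Hg z ltac:(lra) Nz) as [e [e' [Se Hze]]].
          pose proof Se as [Se0 [See [Se1 _]]].
          set (u1 := Rmax u e). set (w1 := Rmin w e').
          assert (Hm1 : u <= u1) by apply Rmax_l. assert (Hm2 : e <= u1) by apply Rmax_r.
          assert (Hm3 : w1 <= w) by apply Rmin_l. assert (Hm4 : w1 <= e') by apply Rmin_r.
          assert (Hm5 : u1 < w1) by (unfold u1, w1; apply Rmax_case; apply Rmin_case; lra).
          destruct (induced_all g h Hg Hind e e' Se) as [A|A].
          + destruct (CLq u1 w1 ltac:(lra) Hm5 ltac:(lra)) as [u' [w' [k [B1 [B2 [B3 [Kk E]]]]]]].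
            exists u', w', (comp gq k). split; [lra|]. split; [lra|]. split; [lra|]. split.
            * apply KK_comp; auto.
            * intros z0 Hz0. rewrite A by lra. rewrite E by lra. auto.
          + exists u1, w1, (fun x => x). split; [lra|]. split; [lra|]. split; [lra|]. split.
            * apply KK_id; auto; lra.
            * intros z0 Hz0. apply A; lra.
        - exists u, w, (fun x => x). split; [lra|]. split; [lra|]. split; [lra|]. split.
          + apply KK_id; auto; lra.
          + intros z Hz. destruct (Hi z ltac:(lra)) as [E|E]; auto. rewrite E.
            destruct (classic (g z = z)); auto. exfalso; apply N; exists z; auto. }
      destruct (Hi x ltac:(lra)) as [E|E].
      * exists (fun x => x). split; [apply (G_id G HG)|]. repeat split; auto.
      * destruct (classic (h x = x)) as [E'|E'].
        { exists (fun x => x). split; [apply (G_id G HG)|]. repeat split; auto. }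
        destruct (Tg c d Hcd x Hx) as [gx [Ggx [Exx [Ecx [Edx CLx]]]]].
        rewrite Gc in Ecx. rewrite Gd in Edx.
        assert (Kx : KK G c d gx).
        { destruct (CLx c d ltac:(lra) ltac:(lra) ltac:(lra)) as [u1 [w1 [k1 [A1 [A2 [A3 [K1 E1]]]]]]].
          destruct (CLq u1 w1 ltac:(lra) A2 ltac:(lra)) as [u2 [w2 [k2 [B1 [B2 [B3 [K2 E2]]]]]]].
          set (z := (u2 + w2) / 2).
          destruct (G_inv G HG gx Ggx) as [gx' [Ggx' Hix]].
          destruct (G_inv G HG k1 (proj1 K1)) as [k1' [Gk1' Hik1]].
          pose proof (KK_inv G c d k1 k1' K1 Gk1' Hik1) as K1'.
          set (v := comp gx' (comp gq (comp k2 k1'))).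
          assert (Gv : G v) by (repeat (apply G_comp; auto); apply K2).
          assert (Kv : KK G c d v).
          { split; auto. unfold v, comp.
            destruct K1' as [_ [C1 [D1 _]]]. destruct K2 as [_ [C2 [D2 _]]].
            rewrite C1, D1, C2, D2, Ecq, Edq.
            rewrite <- Ecx at 1. rewrite <- Edx at 1. rewrite (proj1 (Hix c)), (proj1 (Hix d)).
            repeat split; auto. exists (k1 z). split.
            - apply (KK_bounds G c d k1 K1); try lra. apply HG. unfold z; lra.
            - rewrite (proj1 (Hik1 z)). rewrite <- E2 by (unfold z; lra).
              rewrite E1 by (unfold z; lra). apply Hix. }
          destruct (G_inv G HG v Gv) as [v' [Gv' Hiv]].
          pose proof (KK_inv G c d v v' Kv Gv' Hiv) as Kv'.
          apply (KK_ext G c d (comp gq (comp k2 (comp k1' v')))); auto.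
          - intros y. unfold comp. rewrite <- (proj2 (Hiv y)) at 2. unfold v, comp.
            rewrite (proj2 (Hix _)). auto.
          - apply KK_comp; auto. apply KK_comp; auto. apply KK_comp; auto. }
        exists gx. split; auto. rewrite Exx, Ecx, Edx, Hc, Hd. repeat split; auto.
        apply (CL_shift G HG HL c d h gx Hcd CLK Kx).
    + assert (Nx : g x <> x) by (intro; apply N; exists x; auto).
      destruct (COMP g Hg x ltac:(lra) Nx) as [e [e' [Se Hxe]]].
      pose proof Se as [Se0 [See [Se1 [Sge [Sge' Sgn]]]]].
      assert (e <= c) by (destruct (Rle_dec e c); auto; exfalso; apply N; exists e; split; auto; lra).
      assert (d <= e') by (destruct (Rle_dec d e'); auto; exfalso; apply N; exists e'; split; auto; lra).
      destruct (induced_all g h Hg Hind e e' Se) as [A|A].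
      * destruct (Tg c d Hcd x Hx) as [gx [Ggx [Exx [Ecx [Edx CLx]]]]].
        exists gx. split; auto. rewrite !A by lra. repeat split; auto.
        intros u w H1 H2 H3. destruct (CLx u w H1 H2 H3) as [u' [w' [k [B1 [B2 [B3 [Kk E]]]]]]].
        exists u', w', k. split; [lra|]. split; [lra|]. split; [lra|]. split; auto.
        intros z Hz. rewrite A by lra. auto.
      * exists (fun x => x). split; [apply (G_id G HG)|]. rewrite !A by lra. repeat split; auto.
        intros u w H1 H2 H3. exists u, w, (fun x => x). split; [lra|]. split; [lra|]. split; [lra|].
        split; [apply KK_id; auto; lra|]. intros z Hz. apply A; lra.
Qed.

Definition Grp (G : (R -> R) -> Prop) (f : R -> R) : Prop :=
  good G f /\ exists f', invp f f' /\ good G f'.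

Lemma Grp_group G (HG : is_group G) (HL : without_linked G) : is_group (Grp G).
Proof.
  split; [|split; [|split]].
  - intros g [[H _] _]; auto.
  - split; [apply good_G; auto; apply (G_id G HG)|]. exists (fun x => x). split; [intros x; auto|].
    apply good_G; auto; apply (G_id G HG).
  - intros g h [Gg [g' [Ig Gg']]] [Gh [h' [Ih Gh']]]. split; [apply good_comp; auto|].
    exists (comp h' g'). split; [|apply good_comp; auto].
    unfold invp, Defs.comp, comp; intros x. rewrite (proj1 (Ig (h x))), (proj1 (Ih x)).
    rewrite (proj2 (Ih (g' x))), (proj2 (Ig x)). auto.
  - intros g [Gg [g' [Ig Gg']]]. exists g'. split; [split; auto; exists g; split; auto; apply invp_sym; auto|].
    intros x; apply Ig.
Qed.

Lemma Grp_G G (HG : is_group G) g : G g -> Grp G g.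
Proof.
  intros Gg. split; [apply good_G; auto|]. destruct (G_inv G HG g Gg) as [g' [Gg' Hi]].
  exists g'; split; auto. apply good_G; auto.
Qed.

Lemma Grp_induced G (HG : is_group G) (HL : without_linked G) g h :
  Grp G g -> induced g h -> Grp G h.
Proof.
  intros [Gg [g' [Ig Gg']]] Hind.
  split; [apply (induced_good G HG HL g h Gg (good_Lambda G HG HL g Gg) Hind)|].
  pose proof Hind as [Hh Hi].
  destruct (homeo_has_inv h Hh) as [h' Ih]. exists h'. split; auto.
  pose proof Gg as [Hg _].
  apply (induced_good G HG HL g' h' Gg' (good_Lambda G HG HL g' Gg')).
  split; [apply (homeo_inv h h' Hh Ih)|].
  intros y Hy. pose proof (h_range h' (homeo_inv h h' Hh Ih) y Hy) as Hx.
  destruct (Hi (h' y) Hx) as [E|E]; rewrite (proj2 (Ih y)) in E.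
  - left; auto.
  - right. rewrite E at 2. rewrite (proj1 (Ig (h' y))). auto.
Qed.

Lemma Iter_Grp G (HG : is_group G) (HL : without_linked G) n f : I_iter n G f -> Grp G f.
Proof.
  revert f; induction n; intros f Hf; simpl in Hf.
  - apply Grp_G; auto.
  - apply Hf; [apply Grp_group; auto|]. intros s [g [Ig Hs]]. apply (Grp_induced G HG HL g); auto.
Qed.

Lemma gen_group (S H0 : (R -> R) -> Prop) : is_group H0 -> (forall s, S s -> H0 s) -> is_group (generated S).
Proof.
  intros HG0 HS. split; [|split; [|split]].
  - intros g Hg. apply (G_homeo H0 HG0). apply Hg; auto.
  - intros H HH _. apply (G_id H HH).
  - intros g h Hg Hh H HH HSH. apply (G_comp H HH); [apply Hg| apply Hh]; auto.
  - intros g Hg. pose proof (G_homeo H0 HG0 g (Hg H0 HG0 HS)) as Hgh.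
    destruct (homeo_has_inv g Hgh) as [g' Ig]. exists g'. split; [|intros x; apply Ig].
    intros H HH HSH. destruct (G_inv H HH g (Hg H HH HSH)) as [g'' [Hg'' Ig'']].
    replace g' with g''; auto. apply functional_extensionality. intros x.
    rewrite <- (proj2 (Ig x)) at 1. rewrite (proj1 (Ig'' (g' x))). auto.
Qed.

Lemma Iter_group G (HG : is_group G) (HL : without_linked G) n : is_group (I_iter n G).
Proof.
  destruct n; simpl; auto. apply (gen_group _ (Grp G)); [apply Grp_group; auto|].
  intros s [g [Ig Hs]]. apply (Grp_induced G HG HL g); auto. apply (Iter_Grp G HG HL n); auto.
Qed.

Lemma Iter_mono G (HG : is_group G) (HL : without_linked G) n f : I_iter n G f -> I_iter (S n) G f.
Proof.
  intros Hf. simpl. intros H HH HS. apply HS. exists f. split; auto.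
  pose proof (Iter_Grp G HG HL n f Hf) as [[Hh _] _]. split; auto.
Qed.

Lemma Iter_le G (HG : is_group G) (HL : without_linked G) n m f : I_iter n G f -> I_iter (n + m) G f.
Proof.
  revert n f; induction m; intros n f Hf.
  - rewrite Nat.add_0_r; auto.
  - rewrite Nat.add_succ_r. apply Iter_mono; auto.
Qed.

Lemma Inf_group G (HG : is_group G) (HL : without_linked G) : is_group (I_inf G).
Proof.
  split; [|split; [|split]].
  - intros g [n Hg]. apply (G_homeo _ (Iter_group G HG HL n)); auto.
  - exists 0%nat. apply (G_id G HG).
  - intros g h [n Hg] [m Hh]. exists (n + m)%nat. apply (G_comp _ (Iter_group G HG HL (n + m))).
    + apply Iter_le; auto.
    + rewrite Nat.add_comm. apply Iter_le; auto.
  - intros g [n Hg]. destruct (G_inv _ (Iter_group G HG HL n) g Hg) as [g' [Hg' Ig]].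
    exists g'. split; [exists n; auto| intros x; apply Ig].
Qed.

Lemma stab_fix f (Hf : homeo_plus f) a b : 0 <= a -> a <= b -> b <= 1 -> stab_int a b f -> f a = a /\ f b = b.
Proof.
  intros H1 H2 H3 Hs.
  assert (Ra : a <= f a <= b) by (apply Hs; exists a; split; auto; lra).
  assert (Rb : a <= f b <= b) by (apply Hs; exists b; split; auto; lra).
  split.
  - destruct (proj1 (Hs a) ltac:(lra)) as [x [Hx E]].
    destruct (Rle_lt_or_eq_dec a x ltac:(lra)) as [h|h]; [|rewrite <- h in E; auto].
    pose proof (h_mono f Hf a x ltac:(lra) h ltac:(lra)). lra.
  - destruct (proj1 (Hs b) ltac:(lra)) as [x [Hx E]].
    destruct (Rle_lt_or_eq_dec x b ltac:(lra)) as [h|h]; [|rewrite h in E; auto].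
    pose proof (h_mono f Hf x b ltac:(lra) h ltac:(lra)). lra.
Qed.

Lemma fix_stab f (Hf : homeo_plus f) a b : 0 <= a -> a <= b -> b <= 1 -> f a = a -> f b = b -> stab_int a b f.
Proof.
  intros H1 H2 H3 Ea Eb y. split.
  - intros Hy. destruct (h_surj f Hf y ltac:(lra)) as [x [Hx E]]. exists x. split; auto.
    split; apply (h_le_rev f Hf); lra.
  - intros [x [Hx E]]. subst. split.
    + rewrite <- Ea at 1. apply (h_le f Hf); lra.
    + rewrite <- Eb. apply (h_le f Hf); lra.
Qed.

Theorem lemmal (G : (R -> R) -> Prop) (HG : is_group G) (HL : without_linked G) :
  complete (I_inf G) /\
  (forall x y, 0 <= x <= 1 ->
     ((exists h, I_inf G h /\ h x = y) <-> (exists g, G g /\ g x = y))) /\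
  (forall a b, sfp (I_inf G) a b -> sfp G a b) /\
  (forall a b, sfp G a b -> forall tau : (R -> R) -> R,
     rel_transl (I_inf G) a b tau ->
     forall y, (exists g, G g /\ stab_int a b g /\ tau g = y) <->
               (exists h, I_inf G h /\ stab_int a b h /\ tau h = y)) /\
  (forall H, complete H -> (forall g, G g -> H g) ->
     forall h, I_inf G h -> H h).
Proof.
  assert (P2 : forall a b, sfp (I_inf G) a b -> sfp G a b).
  { intros a b [f [[n Hf] Sf]]. pose proof (Iter_Grp G HG HL n f Hf) as [Gf _].
    apply (good_Lambda G HG HL f Gf); auto. }
  split; [|split; [|split; [|split]]].
  - split; [apply Inf_group; auto|]. split.
    + intros a b c d H1 H2. apply HL; apply P2; auto.
    + intros g h [n Hg] Hind. exists (S n). simpl. intros H HH HS. apply HS. exists g; auto.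
  - intros x y Hx. split.
    + intros [h [[n Hh] E]]. pose proof (Iter_Grp G HG HL n h Hh) as [[_ [O _]] _].
      destruct (O x Hx) as [g [Gg Eg]]. exists g; split; auto; congruence.
    + intros [g [Gg E]]. exists g; split; auto. exists 0%nat; auto.
  - exact P2.
  - intros a b Hab tau [Thom [Tker _]] y. pose proof (sfp_bounds G a b Hab) as Bab. split.
    + intros [g [Gg [Sg Tg]]]. exists g; split; auto. exists 0%nat; auto.
    + intros [h [[n Hh] [Sh Th]]].
      pose proof (Iter_Grp G HG HL n h Hh) as [[Hhh [_ [_ T]]] _].
      destruct (stab_fix h Hhh a b ltac:(lra) ltac:(lra) ltac:(lra) Sh) as [Ha Hb].
      destruct (T a b Hab ((a + b) / 2) ltac:(lra)) as [gam [Gg [_ [Ea [Eb CLg]]]]].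
      destruct (CLg a b ltac:(lra) ltac:(lra) ltac:(lra)) as [u [w [k [A1 [A2 [A3 [[Gk [Kc [Kd _]]] E]]]]]]].
      set (phi := comp gam k).
      assert (Gphi : G phi) by (apply G_comp; auto).
      pose proof (G_homeo G HG phi Gphi) as Hphi.
      destruct (G_inv G HG phi Gphi) as [phi' [Gphi' Iphi]].
      pose proof (G_homeo G HG phi' Gphi') as Hphi'.
      assert (Pa : phi a = a) by (unfold phi, Defs.comp, comp; rewrite Kc, Ea; auto).
      assert (Pb : phi b = b) by (unfold phi, Defs.comp, comp; rewrite Kd, Eb; auto).
      assert (Pa' : phi' a = a) by (rewrite <- Pa at 1; apply Iphi).
      assert (Pb' : phi' b = b) by (rewrite <- Pb at 1; apply Iphi).
      set (psi := comp phi' h).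
      assert (Ipsi : I_inf G psi).
      { apply (G_comp _ (Inf_group G HG HL)); [exists 0%nat; auto| exists n; auto]. }
      assert (Hpsi : homeo_plus psi) by (apply (G_homeo _ (Inf_group G HG HL)); auto).
      assert (Spsi : stab_int a b psi).
      { apply fix_stab; auto; try lra; unfold psi, Defs.comp, comp; [rewrite Ha| rewrite Hb]; auto. }
      assert (Sphi : stab_int a b phi) by (apply fix_stab; auto; lra).
      assert (T0 : tau psi = 0).
      { apply (Tker psi Ipsi Spsi). exists ((u + w) / 2). split; [lra|].
        unfold psi, Defs.comp, comp. rewrite E by lra. apply Iphi. }
      assert (Hcomp : Defs.comp phi psi = h).
      { apply functional_extensionality; intros x. unfold psi, Defs.comp, comp. apply Iphi. }
      assert (Tsum := Thom phi psi ltac:(exists 0%nat; auto) Sphi Ipsi Spsi).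
      rewrite Hcomp in Tsum.
      exists phi. split; auto. split; auto. lra.
  - intros H [HH [_ HHc]] HGH h [n Hh]. revert h Hh. induction n; intros h Hh; simpl in Hh.
    + auto.
    + apply Hh; auto. intros s [g [Ig Hs]]. apply (HHc g); auto.
Qed.
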